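(* Let $Q$ be a finite connected quandle that is isomorphic to a generalized Alexander quandle $\mathrm{GAlex}(G_0,f)$ for some finite group $G_0$ and $f\in\mathrm{Aut}(G_0)$. Let $e\in Q$, $G=\mathrm{Inn}(Q)$, $x=R_e$, $G'$ the derived subgroup of $G$ and $C(x)$ the centralizer of $x$ in $G$. Then the map $\pi_e:C(x)\cap G'\to\mathrm{inn}^{-1}(R_e)$, $\pi_e(g)=eg$, is a bijection. Hence $\pi_e$ induces a $\mathbb{Z}$-module isomorphism $(\pi_e)_*:\mathbb{Z}[C(x)\cap G']\to\mathbb{Z}[\mathrm{inn}^{-1}(R_e)]$, $\sum n_g g\mapsto\sum n_g\pi_e(g)$.
   Context: A quandle is a set with operation $*$ satisfying $a*a=a$; unique right division; $(a*b)*c=(a*c)*(b*c)$. $R_a(y)=y*a$; $\mathrm{Inn}(Q)$ is the permutation group generated by the $R_a$, acting on $Q$ on the right: $ag$ denotes the image of $a$ under $g$; connected means this action is transitive; $\mathrm{inn}(a)=R_a$. For a group $H$ and $f\in\mathrm{Aut}(H)$, $\mathrm{GAlex}(H,f)$ is the quandle on $H$ with $a*b=f(ab^{-1})b$. $\mathbb{Z}[S]$ denotes the free $\mathbb{Z}$-module with basis $S$. *)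

(* Defs.v *)
From mathcomp Require Import all_boot all_order all_algebra all_fingroup.
Set Implicit Arguments. Unset Strict Implicit. Unset Printing Implicit Defensive.

Record quandle (T : finType) := Quandle {
  qop : T -> T -> T;
  qop_idem : forall a, qop a a = a;
  qop_rdiv : forall a, bijective (fun y => qop y a);
  qop_distr : forall a b c, qop (qop a b) c = qop (qop a c) (qop b c)
}.

(* R_a as a permutation of T.  Mathcomp permutations compose as a right
   action: (s * t) x = t (s x), matching the right action of Inn(Q). *)
Definition Rq (T : finType) (Q : quandle T) (a : T) : {perm T} :=
  perm (bij_inj (qop_rdiv Q a)).

Definition Inn (T : finType) (Q : quandle T) : {group {perm T}} :=
  <<[set Rq Q a | a : T]>>%G.

Definition connected_quandle (T : finType) (Q : quandle T) : Prop :=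
  [transitive Inn Q, on [set: T] | 'P].

Definition inn_inv (T : finType) (Q : quandle T) (e : T) : {set T} :=
  [set a | Rq Q a == Rq Q e].

Definition galex_iso (T : finType) (Q : quandle T) (gT0 : finGroupType)
  (f : {perm gT0}) (phi : T -> gT0) : Prop :=
  bijective phi /\
  forall a b, phi (qop Q a b) = (f (phi a * (phi b)^-1) * phi b)%g.

(* Z[A] for a subset A of a finite type U: integer-valued functions on U
   supported in A (the free Z-module with basis A). *)
Definition zfree (U : finType) (A : {set U}) : pred {ffun U -> int} :=
  fun c => [forall x, (x \notin A) ==> (c x == 0)].

Definition zpush (U V : finType) (A : {set U}) (p : U -> V)
  (c : {ffun U -> int}) : {ffun V -> int} :=
  [ffun y => (\sum_(x in A | p x == y) c x)%R].

(* Main.v *)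
Require Import Defs.
From mathcomp Require Import all_boot all_order all_algebra all_fingroup all_solvable.
Set Implicit Arguments. Unset Strict Implicit. Unset Printing Implicit Defensive.
Import GRing.Theory.

Lemma zpush_facts (U V : finType) (A : {set U}) (B : {set V}) (p : U -> V) :
  {in A &, injective p} -> [set p g | g in A] = B ->
  ({morph zpush A p : c d / (c + d)%R} /\
   {in zfree A, forall c, zpush A p c \in zfree B} /\
   {in zfree A &, injective (zpush A p)} /\
   {in zfree B, forall d, exists2 c, c \in zfree A & zpush A p c = d}).
Proof.
move=> inj im.
have sum1 : forall (F : U -> int) s, s \in A ->
    (\sum_(x in A | p x == p s) F x)%R = F s.
  move=> F s sA; apply: big_pred1 => x /=.
  apply/andP/eqP => [[xA /eqP]|->]; first by apply: inj.
  by rewrite sA.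
have sum0 : forall (F : U -> int) y, y \notin B ->
    (\sum_(x in A | p x == y) F x)%R = 0%R.
  move=> F y yB; apply: big_pred0 => x; apply/negbTE/andP => -[xA /eqP pxy].
  by move: yB; rewrite -im -pxy (imset_f _ xA).
split; first by move=> c d; apply/ffunP => y; rewrite !ffunE -big_split; apply: eq_bigr => z _; rewrite ffunE.
split.
  move=> c _; rewrite unfold_in; apply/forallP => y; apply/implyP => yB.
  by rewrite ffunE sum0.
split.
  move=> c d; rewrite !unfold_in => /forallP cA /forallP dA eq; apply/ffunP => s.
  case: (boolP (s \in A)) => sA.
    by have := congr1 (fun h : {ffun V -> int} => h (p s)) eq; rewrite /= !ffunE !sum1.
  by rewrite (eqP (implyP (cA s) sA)) (eqP (implyP (dA s) sA)).
move=> d; rewrite unfold_in => /forallP dB.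
exists [ffun g => if g \in A then d (p g) else 0%R].
  by rewrite unfold_in; apply/forallP => g; apply/implyP => gA; rewrite ffunE (negbTE gA).
apply/ffunP => y; rewrite ffunE.
case: (boolP (y \in B)) => yB.
  move: (yB); rewrite -im => /imsetP [s sA ->].
  by rewrite sum1 // ffunE sA.
by rewrite sum0 // (eqP (implyP (dB y) yB)).
Qed.

Local Open Scope group_scope.

Lemma RqE (T : finType) (Q : quandle T) a y : Rq Q a y = qop Q y a.
Proof. by rewrite /Rq permE. Qed.

Definition Autq (T : finType) (Q : quandle T) : {set {perm T}} :=
  [set g : {perm T} | [forall a, [forall b, g (qop Q a b) == qop Q (g a) (g b)]]].

Lemma Autq_group_set (T : finType) (Q : quandle T) : group_set (Autq Q).
Proof.
apply/group_setP; split.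
  by rewrite inE; apply/forallP => a; apply/forallP => b; rewrite !perm1.
move=> g h; rewrite !inE => /forallP Hg /forallP Hh.
apply/forallP => a; apply/forallP => b; rewrite !permM.
by rewrite (eqP (forallP (Hg a) b)) (eqP (forallP (Hh _) _)).
Qed.

Canonical Autq_group T Q := Group (@Autq_group_set T Q).

Lemma Inn_Autq (T : finType) (Q : quandle T) : Inn Q \subset Autq Q.
Proof.
rewrite /Inn gen_subG; apply/subsetP => r /imsetP [c _ ->].
rewrite inE; apply/forallP => a; apply/forallP => b; rewrite !RqE.
by rewrite qop_distr.
Qed.

Lemma Rq_conj (T : finType) (Q : quandle T) g a :
  g \in Autq Q -> Rq Q (g a) = (Rq Q a) ^ g.
Proof.
rewrite inE => /forallP Hg; apply/permP => y.
rewrite conjgE !permM RqE.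
have := eqP (forallP (Hg (g^-1 y)) a).
by rewrite -permM mulVg perm1 RqE => ->.
Qed.

Lemma decomp (T : finType) (Q : quandle T) (e : T) :
  connected_quandle Q ->
  forall g, g \in Inn Q -> exists2 d, d \in [~: Inn Q, Inn Q] & g e = d e.
Proof.
move=> hconn.
set G := Inn Q; set x := Rq Q e.
have xG : x \in G by apply: mem_gen; apply: imset_f.
have orb : forall a, exists2 g, g \in G & g e = a.
  move=> a; have [g gG ->] := atransP2 hconn (in_setT e) (in_setT a).
  by exists g.
have nN : <[x]> \subset 'N([~: G, G]).
  by rewrite cycle_subG; apply: (subsetP (commg_norml G G)).
have sub : G \subset <[x]> * [~: G, G].
  suff: <<[set Rq Q a | a : T]>> \subset <[x]> <*> [~: G, G].
    have EJ : <[x]> <*> [~: G, G] = <[x]> * [~: G, G] := norm_joinEl nN.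
    by rewrite EJ.
  have EJ : <[x]> <*> [~: G, G] = <[x]> * [~: G, G] := norm_joinEl nN.
  rewrite gen_subG; apply/subsetP => r /imsetP [b _ ->].
  suff H : Rq Q b \in <[x]> * [~: G, G] by move: H; rewrite -EJ.
  have [g gG <-] := orb b.
  rewrite (Rq_conj _ (subsetP (Inn_Autq Q) g gG)) -/x.
  rewrite -(mulKVg x (x ^ g)) -commgEl.
  by apply: mem_mulg; [apply: cycle_id | apply: mem_commg].
move=> g /(subsetP sub) /mulsgP [k d kX dD ->].
exists d => //.
have : k \in 'C[e | 'P].
  move: k kX; apply/subsetP; rewrite cycle_subG.
  by apply/astab1P; change (Rq Q e e = e); rewrite RqE qop_idem.
by move/astab1P => H; rewrite permM; change (d (aperm e k) = d e); rewrite H.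
Qed.

Lemma aut_morph (gT0 : finGroupType) (f : {perm gT0}) a :
  f \in Aut [set: gT0] -> a \in <[f]> ->
  (forall u v, a (u * v) = a u * a v) /\ a 1 = 1.
Proof.
move=> hf aF.
have aA : a \in Aut [set: gT0] by move: a aF; apply/subsetP; rewrite cycle_subG.
have /morphicP hm := Aut_morphic aA.
have hm' : forall u v, a (u * v) = a u * a v by move=> u v; apply: hm; rewrite inE.
split => //; apply: (mulgI (a 1)); by rewrite mulg1 -hm' mulg1.
Qed.

Definition Aff (T : finType) (gT0 : finGroupType) (f : {perm gT0}) (phi : T -> gT0)
  : {set {perm T}} :=
  [set g : {perm T} | [exists a in <[f]>, exists u, [forall y, phi (g y) == a (phi y) * u]]].

Definition Trs (T : finType) (gT0 : finGroupType) (phi : T -> gT0)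
  : {set {perm T}} :=
  [set g : {perm T} | [exists u, [forall y, phi (g y) == phi y * u]]].

Lemma Aff_group_set (T : finType) (gT0 : finGroupType) (f : {perm gT0}) (phi : T -> gT0) :
  f \in Aut [set: gT0] -> group_set (Aff f phi).
Proof.
move=> hf; apply/group_setP; split.
  rewrite inE; apply/existsP; exists 1; rewrite group1 /=.
  by apply/existsP; exists 1; apply/forallP => y; rewrite !perm1 mulg1.
move=> g h; rewrite !inE => /existsP [a /andP [aF /existsP [u /forallP Hg]]].
move=> /existsP [b /andP [bF /existsP [v /forallP Hh]]].
apply/existsP; exists (a * b); rewrite groupM //=.
have [mb _] := aut_morph hf bF.
apply/existsP; exists (b u * v); apply/forallP => y.
by rewrite permM (eqP (Hh _)) (eqP (Hg _)) mb permM mulgA.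
Qed.

Lemma Trs_group_set (T : finType) (gT0 : finGroupType) (phi : T -> gT0) :
  group_set (Trs phi).
Proof.
apply/group_setP; split.
  by rewrite inE; apply/existsP; exists 1; apply/forallP => y; rewrite !perm1 mulg1.
move=> g h; rewrite !inE => /existsP [u /forallP Hg] /existsP [v /forallP Hh].
apply/existsP; exists (u * v); apply/forallP => y.
by rewrite permM (eqP (Hh _)) (eqP (Hg _)) mulgA.
Qed.

Lemma Inn_Aff (T : finType) (Q : quandle T) (gT0 : finGroupType) (f : {perm gT0})
  (phi : T -> gT0) :
  f \in Aut [set: gT0] -> galex_iso Q f phi -> Inn Q \subset Aff f phi.
Proof.
move=> hf [_ hq].
have -> : Aff f phi = Group (Aff_group_set phi hf) by [].
rewrite /Inn gen_subG; apply/subsetP => r /imsetP [b _ ->].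
have [mf _] := aut_morph hf (cycle_id f).
rewrite inE; apply/existsP; exists f; rewrite cycle_id /=.
apply/existsP; exists (f (phi b)^-1 * phi b); apply/forallP => y.
by rewrite RqE hq mf mulgA.
Qed.

Lemma comm_Trs (T : finType) (gT0 : finGroupType) (f : {perm gT0}) (phi : T -> gT0) :
  f \in Aut [set: gT0] -> bijective phi ->
  forall g h, g \in Aff f phi -> h \in Aff f phi -> [~ g, h] \in Trs phi.
Proof.
move=> hf [phi' phiK phiK'] g h gA hA.
have AG := Aff_group_set phi hf.
have cA : [~ g, h] \in Aff f phi by have := @groupR _ (Group AG) g h gA hA.
move: gA hA cA; rewrite !inE.
move=> /existsP [a /andP [aF /existsP [u /forallP Hg]]].
move=> /existsP [b /andP [bF /existsP [v /forallP Hh]]].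
move=> /existsP [c /andP [cF /existsP [w /forallP Hc]]].
have [ma _] := aut_morph hf aF.
have [mb _] := aut_morph hf bF.
have [mc c1] := aut_morph hf cF.
have ab : forall z, b (a z) = a (b z).
  move=> z; rewrite -!permM.
  by have -> : a * b = b * a := (centsP (cycle_abelian f)) a aF b bF.
have E : forall y, h (g y) = [~ g, h] (g (h y)).
  by move=> y; rewrite -!permM mulgA -commgC.
have key : forall z, z * (b u * v) = c z * (c (a v) * c u * w).
  move=> z; have := congr1 phi (E (phi' ((a * b)^-1 z))).
  rewrite (eqP (Hh _)) (eqP (Hg _)) (eqP (Hc _)) (eqP (Hg _)) (eqP (Hh _)) phiK'.
  by rewrite mb ma -!ab -!permM mulVg !perm1 !permM mc mc !mulgA => ->.
have cid : forall z, c z = z.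
  move=> z; have := key z; have k1 := key 1; rewrite c1 !mul1g in k1; rewrite k1.
  by move/mulIg.
apply/existsP; exists w; apply/forallP => y.
by rewrite (eqP (Hc y)) cid.
Qed.


Lemma der_Trs (T : finType) (Q : quandle T) (gT0 : finGroupType) (f : {perm gT0})
  (phi : T -> gT0) :
  f \in Aut [set: gT0] -> galex_iso Q f phi ->
  [~: Inn Q, Inn Q] \subset Trs phi.
Proof.
move=> hf hiso.
have -> : Trs phi = Group (Trs_group_set phi) by [].
rewrite gen_subG; apply/subsetP => c /imset2P [g h gI hI ->].
apply: (comm_Trs hf hiso.1); by apply: (subsetP (Inn_Aff hf hiso)).
Qed.

Lemma der_free (T : finType) (Q : quandle T) (gT0 : finGroupType) (f : {perm gT0})
  (phi : T -> gT0) e :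
  f \in Aut [set: gT0] -> galex_iso Q f phi ->
  forall d, d \in [~: Inn Q, Inn Q] -> d e = e -> d = 1.
Proof.
move=> hf hiso d /(subsetP (der_Trs hf hiso)); rewrite inE.
move=> /existsP [w /forallP Hd] de.
have w1 : w = 1.
  have := eqP (Hd e); rewrite de => /esym /(congr1 (mulg (phi e)^-1)).
  by rewrite mulKg mulVg.
apply/permP => y; rewrite perm1.
case: hiso => [[phi' phiK _] _].
by rewrite -(phiK (d y)) (eqP (Hd y)) w1 mulg1 phiK.
Qed.

Theorem mainTheorem7 (T : finType) (Q : quandle T)
  (gT0 : finGroupType) (f : {perm gT0}) (phi : T -> gT0)
  (hf : f \in Aut [set: gT0])
  (hiso : galex_iso Q f phi)
  (hconn : connected_quandle Q)
  (e : T) :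
  let G := Inn Q in
  let x := Rq Q e in
  let S := ('C_G[x] :&: [~: G, G])%g in
  let pi_e := fun g : {perm T} => g e in
  (* pi_e : C(x) ∩ G' -> inn^{-1}(R_e) is a bijection *)
  ({in S &, injective pi_e} /\ [set pi_e g | g in S] = inn_inv Q e) /\
  (* the induced map Z[C(x) ∩ G'] -> Z[inn^{-1}(R_e)] is a Z-module isomorphism *)
  ({morph zpush S pi_e : c d / (c + d)%R} /\
   {in zfree S, forall c, zpush S pi_e c \in zfree (inn_inv Q e)} /\
   {in zfree S &, injective (zpush S pi_e)} /\
   {in zfree (inn_inv Q e), forall d, exists2 c, c \in zfree S & zpush S pi_e c = d}).
Proof.
move=> G x S pi_e.
have SD : S \subset [~: G, G] := subsetIr _ _.
have SC : S \subset 'C_G[x] := subsetIl _ _.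
have DG : [~: G, G] \subset G by rewrite -derg1 der_sub.
have GA : G \subset Autq Q := Inn_Autq Q.
have inj : {in S &, injective pi_e}.
  move=> g h gS hS ge.
  have gD := subsetP SD g gS; have hD := subsetP SD h hS.
  apply/eqP; rewrite eq_mulgV1; apply/eqP.
  apply: (der_free (e := e) hf hiso); first by rewrite groupM ?groupV.
  by rewrite permM /pi_e /= in ge *; rewrite ge -permM mulgV perm1.
suff im : [set pi_e g | g in S] = inn_inv Q e.
  by split => //; apply: zpush_facts.
apply/setP => a; apply/imsetP/idP.
  move=> [g gS ->]; rewrite inE /pi_e.
  have /setIP [gG gC] := subsetP SC g gS.
  rewrite (Rq_conj _ (subsetP GA g gG)) -/x.
  apply/eqP/conjg_fixP; apply/commgP; exact: esym (cent1P gC).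
rewrite inE => /eqP aI.
have [h hG ha] := atransP2 hconn (in_setT e) (in_setT a).
have [d dD hde] := decomp e hconn hG.
have ad : a = d e by rewrite -hde; exact: ha.
exists d => //.
rewrite inE; apply/andP; split => //.
have dG := subsetP DG d dD.
apply/setIP; split => //.
have : x ^ d = x by rewrite -/x -Rq_conj ?(subsetP GA) // -ad aI.
move/conjg_fixP/commgP => cx.
by apply/cent1P; exact: esym cx.
Qed.
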